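(* Let $(P,\preceq)$ be a poset, $\mathcal{X}:=\{X\subseteq P\mid (X,\preceq)\text{ well-ordered}\}$, $\Lambda$ a set, $\mathcal{I},\mathcal{O}\subseteq\Lambda$ finite disjoint sets, and $s$ a causal $(\mathcal{I},\mathcal{O})$-system over $\mathcal{X}$. Let $i\in\mathcal{I}$, $o\in\mathcal{O}$. Then for every $\mathbf{X}\in\mathcal{X}^{\mathcal{I}\setminus\{i\}}$ there exists a unique $X_i\in\mathcal{X}$ such that $s(\mathbf{X}\cup\{(i,X_i)\})(o)=X_i$.
   Context: $\mathcal{X}^{\mathcal{I}}$ is the set of functions $\mathcal{I}\to\mathcal{X}$. A causal $(\mathcal{I},\mathcal{O})$-system over $\mathcal{X}$ is a function $s:\mathcal{X}^{\mathcal{I}}\to\mathcal{X}^{\mathcal{O}}$ such that for all $\mathbf{X},\mathbf{X}'\in\mathcal{X}^{\mathcal{I}}$, all $o\in\mathcal{O}$ and all $y\in s(\mathbf{X})(o)\mathbin{\triangle}s(\mathbf{X}')(o)$ there exist $i\in\mathcal{I}$ and $x\in\mathbf{X}(i)\mathbin{\triangle}\mathbf{X}'(i)$ with $x\prec y$ (where $\mathbin{\triangle}$ is symmetric difference and $x\prec y$ means $x\preceq y$, $x\ne y$). *)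

(* Defs.v *)
From Stdlib Require Import List Classical ClassicalEpsilon.
Set Implicit Arguments.

Definition is_poset (P : Type) (le : P -> P -> Prop) : Prop :=
  (forall x, le x x) /\
  (forall x y, le x y -> le y x -> x = y) /\
  (forall x y z, le x y -> le y z -> le x z).

Definition lt_of (P : Type) (le : P -> P -> Prop) (x y : P) : Prop :=
  le x y /\ x <> y.

Definition well_ordered (P : Type) (le : P -> P -> Prop) (X : P -> Prop) : Prop :=
  (forall x y, X x -> X y -> le x y \/ le y x) /\
  (forall Y : P -> Prop, (forall y, Y y -> X y) -> (exists y, Y y) ->
     exists m, Y m /\ forall y, Y y -> le m y).

Definition WO (P : Type) (le : P -> P -> Prop) : Type :=
  { X : P -> Prop | well_ordered le X }.

Definition symdiff (P : Type) (A B : P -> Prop) (x : P) : Prop :=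
  (A x /\ ~ B x) \/ (B x /\ ~ A x).

Definition finite_set (L : Type) (A : L -> Prop) : Prop :=
  exists l : list L, forall x, A x -> In x l.

Definition disjoint (L : Type) (A B : L -> Prop) : Prop :=
  forall x, A x -> B x -> False.

Definition family (L : Type) (I : L -> Prop) (T : Type) : Type :=
  forall l : { l : L | I l }, T.

Definition causal (P : Type) (le : P -> P -> Prop) (L : Type)
  (I O : L -> Prop) (s : family I (WO le) -> family O (WO le)) : Prop :=
  forall (X X' : family I (WO le)) (o : { l : L | O l }) (y : P),
    symdiff (proj1_sig (s X o)) (proj1_sig (s X' o)) y ->
    exists (i : { l : L | I l }) (x : P),
      symdiff (proj1_sig (X i)) (proj1_sig (X' i)) x /\ lt_of le x y.

Definition extend (L : Type) (I : L -> Prop) (i : L) (T : Type)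
  (X : family (fun l => I l /\ l <> i) T) (Xi : T) : family I T :=
  fun l =>
    match excluded_middle_informative (proj1_sig l = i) with
    | left _ => Xi
    | right h => X (exist _ (proj1_sig l) (conj (proj2_sig l) h))
    end.

(* Main.v *)
Require Import Defs.
From Stdlib Require Import Classical ClassicalEpsilon FunctionalExtensionality PropExtensionality.
Set Implicit Arguments.

Definition HypF (P : Type) (le : P -> P -> Prop) (F : (P -> Prop) -> (P -> Prop)) : Prop :=
  is_poset le /\ (forall A, well_ordered le A -> well_ordered le (F A)) /\
  (forall A B y, well_ordered le A -> well_ordered le B -> F A y -> ~ F B y ->
     exists x, symdiff A B x /\ lt_of le x y).

Definition below (P : Type) (le : P -> P -> Prop) (A : P -> Prop) (a : P) : P -> Prop :=
  fun x => A x /\ lt_of le x a.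
Definition Tn (P : Type) (le : P -> P -> Prop) F (A : P -> Prop) : P -> Prop :=
  fun y => F A y /\ forall a, A a -> ~ le y a.
Definition good (P : Type) (le : P -> P -> Prop) F (A : P -> Prop) : Prop :=
  well_ordered le A /\ forall a, A a -> Tn le F (below le A a) a /\
     forall y, Tn le F (below le A a) y -> le a y.
Definition initseg (P : Type) (le : P -> P -> Prop) (C A : P -> Prop) : Prop :=
  (forall x, C x -> A x) /\ forall x y, C x -> A y -> le y x -> C y.
Definition Zs (P : Type) (le : P -> P -> Prop) F : P -> Prop :=
  fun x => exists A, good le F A /\ A x.

Lemma wo_sub P (le : P -> P -> Prop) (A B : P -> Prop) :
  well_ordered le A -> (forall x, B x -> A x) -> well_ordered le B.
Proof.
  intros [Ht Hm] Hs; split.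
  - intros; apply Ht; auto.
  - intros Y HY Hne; apply Hm; auto.
Qed.

Lemma F_agree P (le : P -> P -> Prop) F (H : HypF le F) A B y :
  well_ordered le A -> well_ordered le B ->
  (forall x, lt_of le x y -> (A x <-> B x)) -> (F A y <-> F B y).
Proof.
  destruct H as [_ [_ Hc]]; intros HA HB Hag; split; intro Hy; apply NNPP; intro Hn.
  - destruct (Hc A B y HA HB Hy Hn) as [x [Hd Hl]]; specialize (Hag x Hl); unfold symdiff in Hd; tauto.
  - destruct (Hc B A y HB HA Hy Hn) as [x [Hd Hl]]; specialize (Hag x Hl); unfold symdiff in Hd; tauto.
Qed.

Lemma F_ext P (le : P -> P -> Prop) F (H : HypF le F) A B :
  well_ordered le A -> well_ordered le B ->
  (forall x, A x <-> B x) -> forall y, F A y <-> F B y.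
Proof. intros; apply (F_agree H); auto. Qed.

Lemma Tn_ext P (le : P -> P -> Prop) F (H : HypF le F) A B :
  well_ordered le A -> well_ordered le B ->
  (forall x, A x <-> B x) -> forall y, Tn le F A y <-> Tn le F B y.
Proof.
  intros HA HB He y; unfold Tn; rewrite (F_ext H HA HB He y).
  split; intros [h1 h2]; split; auto; intros a Ha; apply h2; apply He; auto.
Qed.

Lemma below_wo P (le : P -> P -> Prop) A a : well_ordered le A -> well_ordered le (below le A a).
Proof. intros HA; eapply wo_sub; [exact HA|]; intros x [h _]; auto. Qed.

Lemma good_cmp P (le : P -> P -> Prop) F (H : HypF le F) A B :
  good le F A -> good le F B -> initseg le A B \/ initseg le B A.
Proof.
  intros [HA GA] [HB GB].
  pose proof H as [[Hr [Ha Ht]] _].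
  set (C := fun x => exists D, initseg le D A /\ initseg le D B /\ D x).
  assert (CA : forall x, C x -> A x) by (intros x [D [[h _] [_ d]]]; auto).
  assert (CB : forall x, C x -> B x) by (intros x [D [_ [[h _] d]]]; auto).
  assert (CdA : forall x y, C x -> A y -> le y x -> C y).
  { intros x y [D [hA [hB d]]] Ay l. exists D; split; auto; split; auto.
    destruct hA as [_ hA]; eauto. }
  assert (CdB : forall x y, C x -> B y -> le y x -> C y).
  { intros x y [D [hA [hB d]]] By l. exists D; split; auto; split; auto.
    destruct hB as [_ hB]; eauto. }
  destruct (classic (forall x, A x -> C x)) as [hAC | hAC].
  { left; split; auto. intros x y Ax By l. apply CA. eapply CdB; eauto. }
  destruct (classic (forall x, B x -> C x)) as [hBC | hBC].
  { right; split; auto. intros x y Bx Ay l. apply CB. eapply CdA; eauto. }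
  exfalso.
  destruct (proj2 HA (fun x => A x /\ ~ C x)) as [a [[Aa nCa] ma]].
  { tauto. } { apply not_all_ex_not in hAC as [x hx]. exists x; tauto. }
  destruct (proj2 HB (fun x => B x /\ ~ C x)) as [b [[Bb nCb] mb]].
  { tauto. } { apply not_all_ex_not in hBC as [x hx]. exists x; tauto. }
  assert (EA : forall x, below le A a x <-> C x).
  { intros x; split.
    - intros [Ax [l ne]]. apply NNPP; intro nC. apply ne. apply Ha; auto.
    - intros Cx. assert (Ax := CA x Cx). split; auto.
      destruct (proj1 HA x a Ax Aa) as [l | l].
      + split; auto. intro e; subst; tauto.
      + exfalso; apply nCa; eapply CdA; eauto. }
  assert (EB : forall x, below le B b x <-> C x).
  { intros x; split.
    - intros [Bx [l ne]]. apply NNPP; intro nC. apply ne. apply Ha; auto.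
    - intros Cx. assert (Bx := CB x Cx). split; auto.
      destruct (proj1 HB x b Bx Bb) as [l | l].
      + split; auto. intro e; subst; tauto.
      + exfalso; apply nCb; eapply CdB; eauto. }
  assert (EAB : forall x, below le A a x <-> below le B b x).
  { intro x; rewrite EA, EB; tauto. }
  assert (TE := Tn_ext H (below_wo a HA) (below_wo b HB) EAB).
  destruct (GA a Aa) as [Ta mTa]. destruct (GB b Bb) as [Tb mTb].
  assert (lab : le a b) by (apply mTa; apply TE; auto).
  assert (lba : le b a) by (apply mTb; apply TE; auto).
  assert (e : a = b) by (apply Ha; auto). subst b.
  apply nCa. exists (fun x => C x \/ x = a). split; [|split]; [| |right; auto].
  - split. { intros x [h|h]; subst; auto. }
    intros x y [Cx|ex] Ay l. { left; eapply CdA; eauto. }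
    subst x. destruct (classic (y = a)) as [ey|ny]; [right; auto|left].
    apply EA; split; auto; split; auto.
  - split. { intros x [h|h]; subst; auto. }
    intros x y [Cx|ex] By l. { left; eapply CdB; eauto. }
    subst x. destruct (classic (y = a)) as [ey|ny]; [right; auto|left].
    apply EB; split; auto; split; auto.
Qed.
Lemma good_initZ P (le : P -> P -> Prop) F (H : HypF le F) A :
  good le F A -> initseg le A (Zs le F).
Proof.
  intros GA; split. { intros x Ax; exists A; auto. }
  intros x y Ax [B [GB By]] l.
  destruct (good_cmp H GA GB) as [[_ h] | [h _]]; eauto.
Qed.

Lemma Z_tot P (le : P -> P -> Prop) F (H : HypF le F) x y :
  Zs le F x -> Zs le F y -> le x y \/ le y x.
Proof.
  intros [A [GA Ax]] [B [GB By]].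
  destruct (good_cmp H GA GB) as [[h _] | [h _]].
  - apply (proj1 (proj1 GB)); auto.
  - apply (proj1 (proj1 GA)); auto.
Qed.

Lemma Z_wo P (le : P -> P -> Prop) F (H : HypF le F) : well_ordered le (Zs le F).
Proof.
  pose proof H as [[Hr [Ha Ht]] _].
  split. { intros; apply (Z_tot H); auto. }
  intros Y HY [y0 Y0].
  destruct (HY y0 Y0) as [A [GA A0]].
  destruct (proj2 (proj1 GA) (fun x => Y x /\ A x)) as [m [[Ym Am] mm]].
  { tauto. } { exists y0; auto. }
  exists m; split; auto. intros y Yy.
  assert (Zm : Zs le F m) by (exists A; auto).
  destruct (Z_tot H (HY y Yy) Zm) as [l | l]; auto.
  apply mm; split; auto. destruct (good_initZ H GA) as [_ hi]. eapply hi; eauto.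
Qed.

Lemma Z_good P (le : P -> P -> Prop) F (H : HypF le F) : good le F (Zs le F).
Proof.
  pose proof H as [[Hr [Ha Ht]] _].
  split. { apply (Z_wo H). }
  intros z [A [GA Az]].
  assert (E : forall x, below le (Zs le F) z x <-> below le A z x).
  { intros x; split.
    - intros [Zx [l ne]]; split; [|split; auto]. destruct (good_initZ H GA) as [_ hi]; eapply hi; eauto; apply l.
    - intros [Ax l]; split; auto. exists A; auto. }
  assert (TE := Tn_ext H (below_wo z (Z_wo H)) (below_wo z (proj1 GA)) E).
  destruct (proj2 GA z Az) as [T1 T2]. split.
  - apply TE; auto.
  - intros y Ty; apply T2; apply TE; auto.
Qed.
Lemma Z_in_F P (le : P -> P -> Prop) F (H : HypF le F) z :
  Zs le F z -> F (Zs le F) z.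
Proof.
  pose proof H as [[Hr [Ha Ht]] _].
  intros Zz. destruct (proj2 (Z_good H) z Zz) as [[T1 _] _].
  apply (F_agree H (Z_wo H) (below_wo z (Z_wo H))); auto.
  intros x l; unfold below; tauto.
Qed.

Lemma Z_fix P (le : P -> P -> Prop) F (H : HypF le F) y :
  F (Zs le F) y <-> Zs le F y.
Proof.
  pose proof H as [[Hr [Ha Ht]] [HFwo _]].
  assert (ZW := Z_wo H).
  split; [|apply (Z_in_F H)].
  intros Fy. apply NNPP; intros nZ.
  destruct (classic (exists z, Zs le F z /\ le y z)) as [[z1 [Z1 l1]] | hn].
  - destruct (proj2 ZW (fun z => Zs le F z /\ le y z)) as [z0 [[Z0 l0] m0]].
    { tauto. } { exists z1; auto. }
    destruct (proj2 (Z_good H) z0 Z0) as [_ T2].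
    assert (T : Tn le F (below le (Zs le F) z0) y).
    { split.
      - refine (proj2 (F_agree H (below_wo z0 ZW) ZW _) Fy).
        intros x [lx nx]; unfold below; split; [tauto|].
        intros Zx; split; auto; split; [eauto|].
        intro e; subst x. apply nx; apply Ha; auto.
      - intros a [Za [la na]] l. apply na. apply Ha; auto. }
    apply nZ. replace y with z0 by (apply Ha; auto); auto.
  - assert (Ty : Tn le F (Zs le F) y).
    { split; auto. intros a Za l; apply hn; eauto. }
    destruct (proj2 (HFwo _ ZW) (Tn le F (Zs le F))) as [m [Tm mm]].
    { intros x [h _]; auto. } { eauto. }
    set (Z' := fun x => Zs le F x \/ x = m).
    assert (Zlm : forall x, Zs le F x -> lt_of le x m).
    { intros x Zx. destruct (proj1 (HFwo _ ZW) x m (Z_in_F H Zx) (proj1 Tm)) as [l|l].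
      - split; auto. intro e; subst x. apply (proj2 Tm m Zx); auto.
      - exfalso; apply (proj2 Tm x Zx); auto. }
    assert (WZ' : well_ordered le Z').
    { split.
      - intros a b [Za|ea] [Zb|eb]; subst.
        + apply (proj1 ZW); auto.
        + left; apply Zlm; auto.
        + right; apply Zlm; auto.
        + left; auto.
      - intros Y HY Hne.
        destruct (classic (exists x, Y x /\ Zs le F x)) as [hz | hz].
        + destruct (proj2 ZW (fun x => Y x /\ Zs le F x)) as [mz [[Ymz Zmz] mmz]].
          { tauto. } { auto. }
          exists mz; split; auto. intros y' Yy'.
          destruct (HY y' Yy') as [Zy'|ey']; [apply mmz; auto|].
          subst y'; apply Zlm; auto.
        + exists m. destruct Hne as [y0 Y0].
          assert (e0 : y0 = m) by (destruct (HY y0 Y0); auto; exfalso; eauto). subst y0.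
          split; auto. intros y' Yy'. destruct (HY y' Yy') as [Zy'|ey'].
          * exfalso; eauto.
          * subst; auto. }
    assert (GZ' : good le F Z').
    { split; auto. intros a [Za|ea].
      - assert (E : forall x, below le Z' a x <-> below le (Zs le F) a x).
        { intros x; split.
          - intros [[Zx|ex] lx]; [split; auto|]. subst x. exfalso.
            apply (proj2 Tm a Za); apply lx.
          - intros [Zx lx]; split; auto; left; auto. }
        assert (TE := Tn_ext H (below_wo a WZ') (below_wo a ZW) E).
        destruct (proj2 (Z_good H) a Za) as [T1 T2]. split.
        + apply TE; auto.
        + intros y' Ty'; apply T2; apply TE; auto.
      - subst a.
        assert (E : forall x, below le Z' m x <-> Zs le F x).
        { intros x; split.
          - intros [[Zx|ex] [lx nx]]; auto. exfalso; auto.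
          - intros Zx; split; [left; auto | apply Zlm; auto]. }
        assert (TE := Tn_ext H (below_wo m WZ') ZW E).
        split.
        + apply TE; auto.
        + intros y' Ty'; apply mm; apply TE; auto. }
    apply (proj2 Tm m); [exists Z'; split; auto; right; auto | auto].
Qed.

Lemma fix_step P (le : P -> P -> Prop) F (H : HypF le F) A B m1 :
  well_ordered le A -> well_ordered le B ->
  (forall y, F A y <-> A y) -> (forall y, F B y <-> B y) ->
  A m1 -> ~ B m1 -> (forall y, A y /\ ~ B y -> le m1 y) ->
  exists x, B x /\ ~ A x /\ lt_of le x m1.
Proof.
  pose proof H as [[Hr [Ha Ht]] [_ Hc]].
  intros WA WB FA FB A1 nB1 mm1.
  destruct (Hc A B m1 WA WB (proj2 (FA m1) A1) (fun h => nB1 (proj1 (FB m1) h))) as [x [Hd [lx nx]]].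
  destruct Hd as [[Ax nBx] | [Bx nAx]].
  - exfalso; apply nx. apply Ha; auto.
  - exists x; split; auto; split; auto; split; auto.
Qed.

Lemma fix_uniq P (le : P -> P -> Prop) F (H : HypF le F) A B :
  well_ordered le A -> well_ordered le B ->
  (forall y, F A y <-> A y) -> (forall y, F B y <-> B y) ->
  forall y, A y <-> B y.
Proof.
  pose proof H as [[Hr [Ha Ht]] [_ Hc]].
  intros WA WB FA FB.
  assert (K : forall A B, well_ordered le A -> well_ordered le B ->
    (forall y, F A y <-> A y) -> (forall y, F B y <-> B y) ->
    (exists y, A y /\ ~ B y) -> False).
  { clear A B WA WB FA FB. intros A B WA WB FA FB hne.
    destruct (proj2 WA (fun x => A x /\ ~ B x)) as [m1 [[A1 nB1] mm1]]; [tauto|auto|].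
    destruct (fix_step (A:=A) (B:=B) H m1 WA WB FA FB A1 nB1 mm1) as [x [Bx [nAx [lx nx]]]].
    destruct (proj2 WB (fun x => B x /\ ~ A x)) as [m2 [[B2 nA2] mm2]]; [tauto|eauto|].
    destruct (fix_step (A:=B) (B:=A) H m2 WB WA FB FA B2 nA2 mm2) as [x' [Ax' [nBx' [lx' nx']]]].
    assert (l1 : le m1 x') by auto.
    assert (l2 : le m2 x) by auto.
    assert (e : x = m1).
    { apply Ha; auto. apply (Ht _ x'); auto. apply (Ht _ m2); auto. }
    auto. }
  intros y; split; intro h; apply NNPP; intro hn.
  - apply (K A B); eauto.
  - apply (K B A); eauto.
Qed.

Theorem corollary6p3 (P : Type) (le : P -> P -> Prop) (L : Type)
  (I O : L -> Prop)
  (s : family I (WO le) -> family O (WO le))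
  (Hposet : is_poset le)
  (HIfin : finite_set I) (HOfin : finite_set O) (HIO : disjoint I O)
  (Hs : causal s)
  (i : { l : L | I l }) (o : { l : L | O l })
  (X : family (fun l => I l /\ l <> proj1_sig i) (WO le)) :
  exists Xi : WO le,
    proj1_sig (s (@extend L I (proj1_sig i) (WO le) X Xi) o) = proj1_sig Xi /\
    (forall Yi : WO le,
       proj1_sig (s (@extend L I (proj1_sig i) (WO le) X Yi) o) = proj1_sig Yi ->
       proj1_sig Yi = proj1_sig Xi).
Proof.
  set (f := fun W : WO le => proj1_sig (s (@extend L I (proj1_sig i) (WO le) X W) o)).
  assert (fc : forall W W' y, f W y -> ~ f W' y ->
            exists x, symdiff (proj1_sig W) (proj1_sig W') x /\ lt_of le x y).
  { intros W W' y h1 h2.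
    destruct (Hs (@extend L I (proj1_sig i) (WO le) X W) (@extend L I (proj1_sig i) (WO le) X W') o y (or_introl (conj h1 h2))) as [j [x [Hd Hl]]].
    exists x; split; auto. unfold extend in Hd.
    destruct (excluded_middle_informative (proj1_sig j = proj1_sig i)); auto.
    unfold symdiff in Hd; tauto. }
  set (F := fun (A : P -> Prop) y => exists HA : well_ordered le A, f (exist _ A HA) y).
  assert (FE : forall A (HA : well_ordered le A) y, F A y <-> f (exist _ A HA) y).
  { intros A HA y; split.
    - intros [HA' h]. replace HA with HA' by apply proof_irrelevance. auto.
    - intros h; exists HA; auto. }
  assert (H : HypF le F).
  { split; [auto|split].
    - intros A HA. eapply wo_sub; [exact (proj2_sig (s (@extend L I (proj1_sig i) (WO le) X (exist _ A HA)) o))|].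
      intros x hx; apply (FE A HA x); auto.
    - intros A B y HA HB h1 h2. apply (FE A HA) in h1.
      rewrite (FE B HB) in h2. exact (fc _ _ y h1 h2). }
  exists (exist _ (Zs le F) (Z_wo H)). split.
  - apply functional_extensionality; intro y; apply propositional_extensionality.
    simpl. rewrite <- (Z_fix H y). rewrite (FE _ (Z_wo H) y). unfold f. tauto.
  - intros [Y HY] hY. simpl in hY |- *.
    apply functional_extensionality; intro y; apply propositional_extensionality.
    apply (fix_uniq H HY (Z_wo H)).
    + intros z. rewrite (FE _ HY z). assert (hY' : f (exist _ Y HY) = Y) by exact hY. rewrite hY'. tauto.
    + apply (Z_fix H).
Qed.
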